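(* Let $d>0$, $N\ge1$, let $\mathcal{S}$ be the 4-PAM constellation labeled by any Gray labeling, let $\boldsymbol{x},\hat{\boldsymbol{x}}\in\mathcal{S}^N$ be distinct, and let $\boldsymbol{h}=[h[1],\dots,h[N]]\in\mathbb{R}^N$ be any channel realization with $h[k]\neq0$ for some $k$ with $x[k]\neq\hat{x}[k]$. Then the asymptotic loss satisfies $\mathsf{L}(\boldsymbol{h},\boldsymbol{x},\hat{\boldsymbol{x}})\le 1.25$ dB.
   Context: $\mathcal{S}=\{s_1,s_2,s_3,s_4\}$ with $s_1=-3d$, $s_2=-d$, $s_3=d$, $s_4=3d$; the Gray labelings (bijections $\{0,1\}^2\to\mathcal{S}$ given by $\boldsymbol{q}=[q_1,\dots,q_4]$, $q_i$ the integer value of the label of $s_i$, most significant bit first) are $[0,1,3,2]$, $[0,2,3,1]$, $[1,0,2,3]$, $[2,0,1,3]$. The flat fading channel is $Y[k]=h[k]x[k]+Z[k]$ with known real coefficients $h[k]$. For each $k$ with $x[k]\neq\hat{x}[k]$: $\mu^{\mathcal{X}}_k=\sigma^{2,\mathcal{X}}_k=(x[k]-\hat{x}[k])^2/(4d^2)$; $\mu^{\mathcal{B}}_k=\sigma^{2,\mathcal{B}}_k=(x[k]-\hat{x}[k])^2/(4d^2)$ except that if $\{x[k],\hat{x}[k]\}=\{s_1,s_4\}$ then $\mu^{\mathcal{B}}_k=3$, $\sigma^{2,\mathcal{B}}_k=1$. Summing over $k$ with $x[k]\neq\hat{x}[k]$, the normalized distances are $a^{\mathcal{X}}(\boldsymbol{h},\boldsymbol{x},\hat{\boldsymbol{x}})=\sum_k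 h[k]^2\mu^{\mathcal{X}}_k/\sqrt{\sum_k h[k]^2\sigma^{2,\mathcal{X}}_k}$ (symbol-wise ML decoder) and $a^{\mathcal{B}}(\boldsymbol{h},\boldsymbol{x},\hat{\boldsymbol{x}})=\sum_k h[k]^2\mu^{\mathcal{B}}_k/\sqrt{\sum_k h[k]^2\sigma^{2,\mathcal{B}}_k}$ (bit-wise max-log decoder under the zero-crossing approximation), and the asymptotic loss is $\mathsf{L}(\boldsymbol{h},\boldsymbol{x},\hat{\boldsymbol{x}})=20\log_{10}\big(a^{\mathcal{X}}(\boldsymbol{h},\boldsymbol{x},\hat{\boldsymbol{x}})/a^{\mathcal{B}}(\boldsymbol{h},\boldsymbol{x},\hat{\boldsymbol{x}})\big)$ dB. *)

(* Defs.v *)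
From Stdlib Require Import Reals List.
Import ListNotations.
Open Scope R_scope.

Inductive sym : Set := S1 | S2 | S3 | S4.

Definition sym_eq_dec (a b : sym) : {a = b} + {a <> b}.
Proof. decide equality. Defined.

Definition sym_val (d : R) (s : sym) : R :=
  match s with S1 => -3 * d | S2 => - d | S3 => d | S4 => 3 * d end.

(* A labeling q = [q1;q2;q3;q4]: q_i is the integer value of the 2-bit label
   of s_i (MSB first). The Gray labelings of 4-PAM: *)
Definition gray_labelings : list (list nat) :=
  [[0;1;3;2]%nat; [0;2;3;1]%nat; [1;0;2;3]%nat; [2;0;1;3]%nat].

Fixpoint sumN (n : nat) (f : nat -> R) : R :=
  match n with O => 0 | S m => sumN m f + f m end.

Definition outer_pair (a b : sym) : bool :=
  match a, b with S1, S4 | S4, S1 => true | _, _ => false end.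

(* Per-coordinate quantities (used only when a <> b). *)
Definition muX (d : R) (a b : sym) : R := (sym_val d a - sym_val d b) ^ 2 / (4 * d ^ 2).
Definition sigma2X (d : R) (a b : sym) : R := (sym_val d a - sym_val d b) ^ 2 / (4 * d ^ 2).
Definition muB (d : R) (a b : sym) : R :=
  if outer_pair a b then 3 else (sym_val d a - sym_val d b) ^ 2 / (4 * d ^ 2).
Definition sigma2B (d : R) (a b : sym) : R :=
  if outer_pair a b then 1 else (sym_val d a - sym_val d b) ^ 2 / (4 * d ^ 2).

Definition wsum (N : nat) (h : nat -> R) (x xh : nat -> sym)
  (g : sym -> sym -> R) : R :=
  sumN N (fun k => if sym_eq_dec (x k) (xh k) then 0 else h k ^ 2 * g (x k) (xh k)).

Definition aX (d : R) (N : nat) (h : nat -> R) (x xh : nat -> sym) : R :=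
  wsum N h x xh (muX d) / sqrt (wsum N h x xh (sigma2X d)).
Definition aB (d : R) (N : nat) (h : nat -> R) (x xh : nat -> sym) : R :=
  wsum N h x xh (muB d) / sqrt (wsum N h x xh (sigma2B d)).

Definition log10 (r : R) : R := ln r / ln 10.

Definition loss (d : R) (N : nat) (h : nat -> R) (x xh : nat -> sym) : R :=
  20 * log10 (aX d N h x xh / aB d N h x xh).

(* Main.v *)
Require Import Defs.
From Stdlib Require Import Reals List Lra Lia.
Open Scope R_scope.

Lemma sumN_lin (n : nat) (f a b : nat -> R) (c : R) :
  (forall k, f k = a k + c * b k) -> sumN n f = sumN n a + c * sumN n b.
Proof. intros H; induction n; simpl; [lra|]. rewrite IHn, H. ring. Qed.

Lemma sumN_nonneg (n : nat) (f : nat -> R) :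
  (forall k, 0 <= f k) -> 0 <= sumN n f.
Proof. intros H; induction n; simpl; [lra|]. specialize (H n). lra. Qed.

Lemma sumN_ge (n : nat) (f : nat -> R) k :
  (forall k, 0 <= f k) -> (k < n)%nat -> f k <= sumN n f.
Proof.
  intros H; induction n; intros Hk; [lia|]. simpl.
  destruct (Nat.eq_dec k n) as [->|Hne].
  - pose proof (sumN_nonneg n f H). lra.
  - pose proof (H n). assert (f k <= sumN n f) by (apply IHn; lia). lra.
Qed.

Definition ga (h : nat -> R) (x xh : nat -> sym) (d : R) k :=
  if sym_eq_dec (x k) (xh k) then 0 else
  if outer_pair (x k) (xh k) then 0 else h k ^ 2 * muX d (x k) (xh k).
Definition gb (h : nat -> R) (x xh : nat -> sym) k :=
  if sym_eq_dec (x k) (xh k) then 0 else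
  if outer_pair (x k) (xh k) then h k ^ 2 else 0.

Theorem theorem5 (d : R) (N : nat) (q : list nat)
  (x xh : nat -> sym) (h : nat -> R) :
  0 < d -> (1 <= N)%nat -> In q gray_labelings ->
  (exists k, (k < N)%nat /\ x k <> xh k) ->
  (exists k, (k < N)%nat /\ x k <> xh k /\ h k <> 0) ->
  loss d N h x xh <= 5 / 4.
Proof.
  intros Hd _ _ _ [k0 [Hk0 [Hx0 Hh0]]].
  set (A := sumN N (ga h x xh d)). set (B := sumN N (gb h x xh)).
  assert (Hd2 : d <> 0) by lra.
  assert (E9 : wsum N h x xh (muX d) = A + 9 * B).
  { apply sumN_lin. intro k. unfold ga, gb, muX.
    destruct (sym_eq_dec (x k) (xh k)); [lra|].
    destruct (x k), (xh k); simpl; try congruence; try field; auto. }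
  assert (E9' : wsum N h x xh (sigma2X d) = A + 9 * B) by exact E9.
  assert (E3 : wsum N h x xh (muB d) = A + 3 * B).
  { apply sumN_lin. intro k. unfold ga, gb, muB, muX.
    destruct (sym_eq_dec (x k) (xh k)); [lra|].
    destruct (x k), (xh k); simpl; try congruence; try field; auto. }
  assert (E1 : wsum N h x xh (sigma2B d) = A + 1 * B).
  { apply sumN_lin. intro k. unfold ga, gb, sigma2B, muX.
    destruct (sym_eq_dec (x k) (xh k)); [lra|].
    destruct (x k), (xh k); simpl; try congruence; try field; auto. }
  assert (Hpos : forall k, 0 <= ga h x xh d k /\ 0 <= gb h x xh k).
  { intro k. unfold ga, gb, muX.
    destruct (sym_eq_dec (x k) (xh k)); [lra|].
    pose proof (pow2_ge_0 (h k)).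
    destruct (outer_pair (x k) (xh k)); split; try lra.
    apply Rmult_le_pos; auto. apply Rmult_le_pos. apply pow2_ge_0.
    left; apply Rinv_0_lt_compat. assert (0 < d^2) by (apply pow_lt; lra). lra. }
  assert (HA : 0 <= A) by (apply sumN_nonneg; intro; apply Hpos).
  assert (HB : 0 <= B) by (apply sumN_nonneg; intro; apply Hpos).
  assert (HAB : 0 < A + B).
  { assert (Hk : 0 < ga h x xh d k0 + gb h x xh k0).
    { unfold ga, gb, muX. destruct (sym_eq_dec (x k0) (xh k0)); [congruence|].
      assert (0 < h k0 ^ 2) by (pose proof (Rsqr_pos_lt _ Hh0); unfold Rsqr in *; nra).
      assert (0 < d^2) by (apply pow_lt; lra).
      destruct (x k0), (xh k0); simpl; try congruence;
      try lra; rewrite Rplus_0_r;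
      apply Rmult_lt_0_compat; auto; apply Rdiv_lt_0_compat; nra. }
    pose proof (sumN_ge N (ga h x xh d) k0 (fun k => proj1 (Hpos k)) Hk0).
    pose proof (sumN_ge N (gb h x xh) k0 (fun k => proj2 (Hpos k)) Hk0).
    unfold A, B. lra. }
  unfold loss, aX, aB. rewrite E9, E9', E3, E1.
  set (S9 := A + 9 * B). set (S3 := A + 3 * B). set (S1 := A + 1 * B).
  assert (P9 : 0 < S9) by (unfold S9; lra).
  assert (P3 : 0 < S3) by (unfold S3; lra).
  assert (P1 : 0 < S1) by (unfold S1; lra).
  pose proof (sqrt_lt_R0 _ P9). pose proof (sqrt_lt_R0 _ P1).
  set (r := S9 / sqrt S9 / (S3 / sqrt S1)).
  assert (Hr : 0 < r).
  { unfold r. apply Rdiv_lt_0_compat; apply Rdiv_lt_0_compat; auto. }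
  assert (Hr2 : r ^ 2 <= 4 / 3).
  { assert (r = sqrt S9 * sqrt S1 / S3).
    { unfold r. pose proof (sqrt_sqrt S9 (Rlt_le _ _ P9)). field_simplify; try lra.
      rewrite <- H1 at 1. field. lra. }
    rewrite H1. unfold Rdiv. rewrite !Rpow_mult_distr.
    rewrite <- !Rsqr_pow2, !Rsqr_sqrt by lra.
    rewrite ?pow_inv. apply Rmult_le_reg_r with (S3 ^ 2). apply pow_lt; lra.
    idtac.
    replace (S9 * S1 * (/ S3)² * S3 ^ 2) with (S9 * S1) by (unfold Rsqr; field; lra).
    assert (3 * (S9 * S1) <= 4 * S3 ^ 2) by (unfold S9, S1, S3; pose proof (pow2_ge_0 (A - 3*B)); nra). lra. }
  assert (H16 : r ^ 16 <= 10).
  { replace (r ^ 16) with ((r ^ 2) ^ 8) by (rewrite <- pow_mult; reflexivity).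
    apply Rle_trans with ((4/3) ^ 8). apply pow_incr. split; [nra|auto]. lra. }
  assert (Hl10 : 0 < ln 10) by (rewrite <- ln_1; apply ln_increasing; lra).
  unfold log10. fold r.
  assert (H3 : ln (r ^ 16) <= ln 10).
  { destruct H16 as [H16|H16]; [left; apply ln_increasing; auto; apply pow_lt; auto|rewrite H16; lra]. }
  rewrite ln_pow in H3 by auto. simpl INR in H3.
  apply Rmult_le_reg_r with (ln 10); auto.
  unfold Rdiv. rewrite Rmult_assoc, (Rmult_assoc (ln r)), Rinv_l by lra. lra.
Qed.
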